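(* $(U_0,\alpha_N\colon N\otimes U_0\to U_0)$ is a corecursive algebra for the functor $N\otimes-$ on $\mathsf{SquaSet}$.
   Context: Let $M_0=\{(r,s)\in[0,1]^2: r\in\{0,1\}\text{ or } s\in\{0,1\}\}$. A square set is a pair $(X,S_X)$ with $X$ a set and $S_X\colon M_0\to X$ injective; $\mathsf{SquaSet}$ has square sets as objects and maps $f$ with $f\circ S_X=S_Y$ as morphisms. Let $N=\{0,1,2\}^2$, also viewed as points of $\mathbb{R}^2$. For a square set $X$, $N\otimes X=(N\times X)/\!\sim$, where $\sim$ is the equivalence relation generated by $(m,S_X(p))\sim(n,S_X(q))$ whenever $m,n\in N$ differ by exactly $1$ in exactly one coordinate and $(m+p)/3=(n+q)/3$; $n\otimes x$ is the class of $(n,x)$; $S_{N\otimes X}(p)=n\otimes S_X(3p-n)$ for any $n\in N$ with $p\in(n+[0,1]^2)/3$; $(N\otimes f)(n\otimes x)=n\otimes f(x)$. $U_0=[0,1]^2$ with $S_{U_0}$ the inclusion, and $\alpha_N(n\otimes z)=\frac13(n+z)$. An algebra $(A,a\colon FA\to A)$ is corecursive if for every coalgebra $e\colon X\to FX$ there is a unique morphism $e^\dagger\colon X\to A$ with $e^\dagger=a\circ Fe^\dagger\circ e$. *)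

(* Defs.v *)
From Stdlib Require Import Reals Lra ClassicalEpsilon Relations.
Open Scope R_scope.

Definition inI (x : R) : Prop := 0 <= x <= 1.
Definition inSq (p : R * R) : Prop := inI (fst p) /\ inI (snd p).
Definition inM0 (p : R * R) : Prop :=
  inSq p /\ (fst p = 0 \/ fst p = 1 \/ snd p = 0 \/ snd p = 1).
Definition M0 : Type := {p : R * R | inM0 p}.

(* A "pre-square set": a set X with a map S_X : M_0 -> X.  A square set is one
   whose S_X is injective (predicate [is_squaset]). *)
Record PSq := { car :> Type; sq : M0 -> car }.
Definition is_squaset (X : PSq) : Prop := forall p q, sq X p = sq X q -> p = q.

Record Hom (X Y : PSq) := { hom :> car X -> car Y;
                            hom_sq : forall p, hom (sq X p) = sq Y p }.

Inductive t3 := T0 | T1 | T2.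
Definition t3R (a : t3) : R := match a with T0 => 0 | T1 => 1 | T2 => 2 end.
Definition Nidx : Type := (t3 * t3)%type.

Definition adjacent (m n : Nidx) : Prop :=
  (fst m = fst n /\ Rabs (t3R (snd m) - t3R (snd n)) = 1) \/
  (snd m = snd n /\ Rabs (t3R (fst m) - t3R (fst n)) = 1).

Definition cell_pt (n : Nidx) (p : R * R) : R * R :=
  ((t3R (fst n) + fst p) / 3, (t3R (snd n) + snd p) / 3).

Definition gen (X : PSq) (a b : Nidx * car X) : Prop :=
  exists (m n : Nidx) (p q : M0),
    a = (m, sq X p) /\ b = (n, sq X q) /\ adjacent m n /\
    cell_pt m (proj1_sig p) = cell_pt n (proj1_sig q).

Definition tensor_eqv (X : PSq) : Nidx * car X -> Nidx * car X -> Prop :=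
  clos_refl_sym_trans _ (gen X).

Definition tcls (X : PSq) (a : Nidx * car X) : Nidx * car X -> Prop :=
  tensor_eqv X a.
Definition TCar (X : PSq) : Type :=
  {C : Nidx * car X -> Prop | exists a, C = tcls X a}.
Definition tclass (X : PSq) (a : Nidx * car X) : TCar X :=
  exist _ (tcls X a) (ex_intro _ a eq_refl).
Definition trepr (X : PSq) (c : TCar X) : Nidx * car X :=
  proj1_sig (constructive_indefinite_description _ (proj2_sig c)).

(* canonical cell index n with p in (n + [0,1]^2)/3 *)
Definition cellc (x : R) : t3 :=
  if Rlt_dec (3 * x) 1 then T0 else if Rlt_dec (3 * x) 2 then T1 else T2.
Definition cellof (p : R * R) : Nidx := (cellc (fst p), cellc (snd p)).
Definition resc (n : Nidx) (p : R * R) : R * R :=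
  (3 * fst p - t3R (fst n), 3 * snd p - t3R (snd n)).

Lemma cellc_bounds (x : R) : inI x ->
  inI (3 * x - t3R (cellc x)) /\
  (x = 0 -> 3 * x - t3R (cellc x) = 0) /\ (x = 1 -> 3 * x - t3R (cellc x) = 1).
Proof.
  unfold inI, cellc; intros H.
  destruct (Rlt_dec (3 * x) 1); [|destruct (Rlt_dec (3 * x) 2)]; simpl;
    repeat split; intros; lra.
Qed.

Lemma resc_M0 (p : M0) : inM0 (resc (cellof (proj1_sig p)) (proj1_sig p)).
Proof.
  destruct p as [[x y] [[Hx Hy] Hb]]; simpl.
  destruct (cellc_bounds x Hx) as [A [B C]].
  destruct (cellc_bounds y Hy) as [D [E F]].
  unfold inM0, inSq, resc, cellof; simpl.
  split; [split; assumption|].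
  destruct Hb as [H|[H|[H|H]]]; simpl in H; auto.
Qed.

Definition tsq (X : PSq) (p : M0) : TCar X :=
  tclass X (cellof (proj1_sig p),
            sq X (exist _ (resc (cellof (proj1_sig p)) (proj1_sig p)) (resc_M0 p))).
Definition NT (X : PSq) : PSq := {| car := TCar X; sq := tsq X |}.

Definition Nmap {X Y : PSq} (f : car X -> car Y) (c : car (NT X)) : car (NT Y) :=
  let r := trepr X c in tclass Y (fst r, f (snd r)).

Definition U0 : PSq :=
  {| car := {p : R * R | inSq p};
     sq := fun p => exist _ (proj1_sig p) (proj1 (proj2_sig p)) |}.

Lemma cell_pt_sq (n : Nidx) (z : R * R) : inSq z -> inSq (cell_pt n z).
Proof.
  destruct n as [a b]; destruct z as [x y]; unfold inSq, inI, cell_pt; simpl.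
  destruct a, b; simpl; lra.
Qed.

Definition alphaN (c : car (NT U0)) : car U0 :=
  let r := trepr U0 c in
  exist _ (cell_pt (fst r) (proj1_sig (snd r))) (cell_pt_sq _ _ (proj2_sig (snd r))).

(* Main.v *)
Require Import Defs.
From Stdlib Require Import Arith Reals Lra Lia ClassicalEpsilon Relations ProofIrrelevance.
Open Scope R_scope.

Fixpoint Pk (a : nat -> R) (k : nat) : R :=
  match k with O => 0 | S k => (a O + Pk (fun i => a (S i)) k) / 3 end.

Definition okd (a : nat -> R) : Prop := forall i, 0 <= a i <= 2.

Definition Squeeze (a : nat -> R) (v : R) : Prop :=
  forall k, Pk a k <= v <= Pk a k + / 3 ^ k.

Lemma inv3S k : / 3 ^ (S k) = / 3 * / 3 ^ k.
Proof. simpl. rewrite Rinv_mult. reflexivity. Qed.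

Lemma pow3_pos k : 0 < / 3 ^ k.
Proof. apply Rinv_0_lt_compat. apply pow_lt. lra. Qed.

Lemma P01 : forall m a, okd a -> 0 <= Pk a m <= 1.
Proof.
  induction m; intros a Ha; simpl. lra.
  assert (H := IHm (fun i => a (S i)) (fun i => Ha (S i))).
  specialize (Ha O). lra.
Qed.

Lemma Pmono : forall k a m, okd a -> Pk a k <= Pk a (k + m) <= Pk a k + / 3 ^ k.
Proof.
  induction k; intros a m Ha.
  - simpl. rewrite Rinv_1. pose proof (P01 m a Ha). lra.
  - rewrite inv3S. simpl.
    assert (H := IHk (fun i => a (S i)) m (fun i => Ha (S i))).
    pose proof (pow3_pos k). lra.
Qed.

Lemma pow3_ge k : INR k + 1 <= 3 ^ k.
Proof.
  induction k. simpl. lra.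
  rewrite S_INR. simpl. pose proof (pos_INR k). lra.
Qed.

Lemma zero_small d : (forall k, Rabs d <= / 3 ^ k) -> d = 0.
Proof.
  intros H. destruct (Req_dec d 0) as [|Hd]; auto.
  assert (Hp : 0 < Rabs d) by (apply Rabs_pos_lt; auto).
  destruct (archimed_cor1 (Rabs d) Hp) as [N [HN HN0]].
  specialize (H N).
  assert (0 < INR N) by (apply lt_0_INR; auto).
  assert (/ 3 ^ N <= / INR N).
  { apply Rinv_le_contravar; auto. pose proof (pow3_ge N). lra. }
  lra.
Qed.

Lemma squeeze_unique a v w : Squeeze a v -> Squeeze a w -> v = w.
Proof.
  intros Hv Hw. apply Rminus_diag_uniq. apply zero_small. intros k.
  specialize (Hv k); specialize (Hw k).
  unfold Rabs; destruct (Rcase_abs (v - w)); lra.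
Qed.

Lemma squeeze_exists a : okd a -> exists v, Squeeze a v.
Proof.
  intros Ha.
  set (E := fun x => exists k, x = Pk a k).
  assert (Hb : bound E).
  { exists 1. intros x [k ->]. apply (P01 k a Ha). }
  assert (Hn : exists x, E x) by (exists 0; exists O; reflexivity).
  destruct (completeness E Hb Hn) as [m [Hub Hlub]].
  exists m. intros k. split.
  - apply Hub. exists k. reflexivity.
  - apply Hlub. intros x [j ->].
    destruct (le_lt_dec j k) as [Hjk|Hjk].
    + replace k with (j + (k - j))%nat by lia.
      pose proof (Pmono j a (k - j) Ha). pose proof (pow3_pos (j + (k - j))). lra.
    + replace j with (k + (j - k))%nat by lia.
      apply (Pmono k a (j - k) Ha).
Qed.

Definition V (a : nat -> R) : R := epsilon (inhabits 0) (Squeeze a).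

Lemma V_spec a : okd a -> Squeeze a (V a).
Proof. intros Ha. unfold V. apply epsilon_spec. apply squeeze_exists; auto. Qed.

Lemma V01 a : okd a -> 0 <= V a <= 1.
Proof. intros Ha. pose proof (V_spec a Ha O). simpl in H. rewrite Rinv_1 in H. lra. Qed.

Lemma V_rec a : okd a -> V a = (a O + V (fun i => a (S i))) / 3.
Proof.
  intros Ha. apply (squeeze_unique a). apply V_spec; auto.
  assert (Hs : okd (fun i => a (S i))) by (intro i; apply Ha).
  pose proof (V_spec _ Hs) as HS. pose proof (V01 _ Hs).
  intros [|k].
  - simpl. rewrite Rinv_1. specialize (Ha O). lra.
  - rewrite inv3S. simpl. specialize (HS k). lra.
Qed.

Lemma U0_ext (u v : car U0) : proj1_sig u = proj1_sig v -> u = v.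
Proof.
  destruct u as [u Hu], v as [v Hv]; simpl; intros ->.
  f_equal. apply proof_irrelevance.
Qed.

Lemma U0_inv : forall a b, tensor_eqv U0 a b ->
  cell_pt (fst a) (proj1_sig (snd a)) = cell_pt (fst b) (proj1_sig (snd b)).
Proof.
  intros a b H. induction H.
  - destruct H as (m & n & p & q & -> & -> & _ & Heq). simpl. exact Heq.
  - reflexivity.
  - auto.
  - congruence.
Qed.

Lemma trepr_eqv (X : PSq) (a : Nidx * car X) : tensor_eqv X a (trepr X (tclass X a)).
Proof.
  unfold trepr. destruct (constructive_indefinite_description _ _) as [r Hr].
  simpl in *. change (tcls X a r). rewrite Hr. apply rst_refl.
Qed.

Lemma alpha_class (n : Nidx) (w : car U0) :
  proj1_sig (alphaN (tclass U0 (n, w))) = cell_pt n (proj1_sig w).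
Proof.
  unfold alphaN. simpl. symmetry.
  apply (U0_inv (n, w)). apply trepr_eqv.
Qed.

Definition Inv (X : PSq) (P0 : R * R) (a : Nidx * car X) : Prop :=
  exists q, snd a = sq X q /\ cell_pt (fst a) (proj1_sig q) = P0.

Lemma X_inv (X : PSq) (HX : is_squaset X) (P0 : R * R) :
  forall a b, tensor_eqv X a b -> (Inv X P0 a <-> Inv X P0 b).
Proof.
  intros a b H. induction H.
  - destruct H as (m & n & p & q & -> & -> & _ & Heq). unfold Inv; simpl. split.
    + intros [q0 [H1 H2]]. apply HX in H1. subst q0. exists q. split; congruence.
    + intros [q0 [H1 H2]]. apply HX in H1. subst q0. exists p. split; congruence.
  - tauto.
  - tauto.
  - tauto.
Qed.

Lemma cell_resc (p : R * R) : cell_pt (cellof p) (resc (cellof p) p) = p.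
Proof.
  destruct p as [x y]. unfold cell_pt, resc; simpl. f_equal; field.
Qed.

Definition cX (X : PSq) (e : car X -> car (NT X)) (x : car X) : Nidx := fst (trepr X (e x)).
Definition gX (X : PSq) (e : car X -> car (NT X)) (x : car X) : car X := snd (trepr X (e x)).

Lemma boundary (X : PSq) (HX : is_squaset X) (e : Hom X (NT X)) (p : M0) :
  exists q, gX X e (sq X p) = sq X q /\
            cell_pt (cX X e (sq X p)) (proj1_sig q) = proj1_sig p.
Proof.
  unfold gX, cX. rewrite (hom_sq _ _ e p). simpl. unfold tsq.
  set (a0 := (cellof (proj1_sig p), _)).
  assert (H := trepr_eqv X a0).
  apply (X_inv X HX (proj1_sig p)) in H. apply H.
  exists (exist _ (resc (cellof (proj1_sig p)) (proj1_sig p)) (resc_M0 p)).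
  split; [reflexivity|]. simpl. apply cell_resc.
Qed.

Fixpoint gi (X : PSq) (e : car X -> car (NT X)) (i : nat) (x : car X) : car X :=
  match i with O => x | S i => gi X e i (gX X e x) end.

Definition dig1 X e x i := t3R (fst (cX X e (gi X e i x))).
Definition dig2 X e x i := t3R (snd (cX X e (gi X e i x))).

Lemma t3R_ok a : 0 <= t3R a <= 2.
Proof. destruct a; simpl; lra. Qed.

Lemma dig1_ok X e x : okd (dig1 X e x).
Proof. intro i; apply t3R_ok. Qed.
Lemma dig2_ok X e x : okd (dig2 X e x).
Proof. intro i; apply t3R_ok. Qed.

Lemma hval_in X e x : inSq (V (dig1 X e x), V (dig2 X e x)).
Proof. split; simpl; [apply V01, dig1_ok | apply V01, dig2_ok]. Qed.

Definition hval X e (x : car X) : car U0 :=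
  exist _ (V (dig1 X e x), V (dig2 X e x)) (hval_in X e x).

Lemma sol_eq (X : PSq) (e : car X -> car (NT X)) (f : car X -> car U0) x :
  f x = alphaN (Nmap f (e x)) ->
  proj1_sig (f x) = cell_pt (cX X e x) (proj1_sig (f (gX X e x))).
Proof. intros H. rewrite H. unfold Nmap. rewrite alpha_class. reflexivity. Qed.

Lemma sol_squeeze (X : PSq) (e : car X -> car (NT X)) (f : car X -> car U0) :
  (forall x, f x = alphaN (Nmap f (e x))) ->
  forall k x, (Pk (dig1 X e x) k <= fst (proj1_sig (f x)) <= Pk (dig1 X e x) k + / 3 ^ k) /\
              (Pk (dig2 X e x) k <= snd (proj1_sig (f x)) <= Pk (dig2 X e x) k + / 3 ^ k).
Proof.
  intros Hf. induction k; intros x.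
  - simpl. rewrite Rinv_1. destruct (proj2_sig (f x)) as [[? ?] [? ?]]. lra.
  - rewrite inv3S. pose proof (pow3_pos k).
    assert (E := sol_eq X e f x (Hf x)).
    destruct (IHk (gX X e x)) as [H1 H2].
    change (Pk (dig1 X e x) (S k)) with ((dig1 X e x O + Pk (dig1 X e (gX X e x)) k) / 3).
    change (Pk (dig2 X e x) (S k)) with ((dig2 X e x O + Pk (dig2 X e (gX X e x)) k) / 3).
    rewrite E. unfold cell_pt, dig1, dig2. simpl. unfold dig1, dig2 in H1, H2. simpl in H1, H2.
    split; lra.
Qed.

Theorem mainTheorem7 :
  forall (X : PSq), is_squaset X ->
  forall e : Hom X (NT X),
    exists h : Hom X U0,
      (forall x, h x = alphaN (Nmap h (e x))) /\
      (forall h' : Hom X U0,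
          (forall x, h' x = alphaN (Nmap h' (e x))) -> forall x, h' x = h x).
Proof.
  intros X HX e.
  assert (Hsq : forall p, hval X e (sq X p) = sq U0 p).
  { intros p. apply U0_ext. simpl.
    assert (K : forall k p, (Pk (dig1 X e (sq X p)) k <= fst (proj1_sig p) <= Pk (dig1 X e (sq X p)) k + / 3 ^ k) /\
              (Pk (dig2 X e (sq X p)) k <= snd (proj1_sig p) <= Pk (dig2 X e (sq X p)) k + / 3 ^ k)).
    { induction k; intros q.
      - simpl. rewrite Rinv_1. destruct q as [[x y] [[Hx Hy] Hb]]. unfold inI in *. simpl in *. lra.
      - rewrite inv3S. pose proof (pow3_pos k).
        destruct (boundary X HX e q) as [q' [Hg Hc]].
        change (Pk (dig1 X e (sq X q)) (S k)) with ((dig1 X e (sq X q) O + Pk (dig1 X e (gX X e (sq X q))) k) / 3).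
        change (Pk (dig2 X e (sq X q)) (S k)) with ((dig2 X e (sq X q) O + Pk (dig2 X e (gX X e (sq X q))) k) / 3).
        rewrite Hg. destruct (IHk q') as [H1 H2].
        rewrite <- Hc. unfold cell_pt, dig1, dig2. simpl. unfold dig1, dig2 in H1, H2. simpl in H1, H2. split; lra. }
    destruct (proj1_sig p) as [x y] eqn:Ep.
    f_equal.
    - symmetry. apply (squeeze_unique (dig1 X e (sq X p))).
      + intro k. destruct (K k p) as [H1 _]. rewrite Ep in H1. exact H1.
      + apply V_spec, dig1_ok.
    - symmetry. apply (squeeze_unique (dig2 X e (sq X p))).
      + intro k. destruct (K k p) as [_ H2]. rewrite Ep in H2. exact H2.
      + apply V_spec, dig2_ok. }
  set (h := {| hom := hval X e; hom_sq := Hsq |}).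
  assert (Hh : forall x, h x = alphaN (Nmap h (e x))).
  { intros x. apply U0_ext. unfold Nmap. rewrite alpha_class. simpl.
    fold (gX X e x) (cX X e x).
    rewrite (V_rec (dig1 X e x) (dig1_ok X e x)), (V_rec (dig2 X e x) (dig2_ok X e x)).
    reflexivity. }
  exists h. split; [exact Hh|].
  intros h' Hh' x. apply U0_ext.
  assert (A := sol_squeeze X e h' Hh').
  change (proj1_sig (h x)) with (V (dig1 X e x), V (dig2 X e x)).
  destruct (proj1_sig (h' x)) as [u v] eqn:E. f_equal.
  - apply (squeeze_unique (dig1 X e x)).
    + intro k. destruct (A k x) as [H1 _]. rewrite E in H1. exact H1.
    + apply V_spec, dig1_ok.
  - apply (squeeze_unique (dig2 X e x)).
    + intro k. destruct (A k x) as [_ H2]. rewrite E in H2. exact H2.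
    + apply V_spec, dig2_ok.
Qed.
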